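(* Let $t \geq 1$, $W \geq 2$ and $R \geq 2$. Then there is no fast write (W1R2) implementation of a multi-writer multi-reader atomic register in the message-passing client–server model described in the context, i.e., no wait-free implementation tolerating the crash of up to $t$ of the $S$ servers in which every write operation completes after one round-trip of communication and every read operation completes after (at most) two round-trips of communication.
   Context: System model: there are three disjoint sets of processes: a set of $S \geq 2$ servers $\{s_1,\dots,s_S\}$, a set of $R$ readers $\{r_1,\dots,r_R\}$ and a set of $W$ writers $\{w_1,\dots,w_W\}$ (readers and writers are called clients). Clients and servers communicate by asynchronous message passing over bidirectional reliable channels; there is no communication between servers and no communication between clients. In any execution, any number of clients and up to $t$ of the $S$ servers may crash. An implementation is wait-free: every invoked read or write operation of a non-crashed client eventually returns regardless of the status of other clients. Only writers invoke $write(v)$ and only readers invoke $read()$, which returns a value. A round-trip of communication is one phase in which the client sends a message to all servers (to query or update them) and waits for replies; since up to $t$ servers may crash, a client can only wait for replies from $S-t$ servers. A W1R2 implementation is one in which every write uses exactly one round-trip and every read uses two round-trips. Atomicity: an execution is a sequence of invocation and response events with distinct global timestamps; $O_1 \prec_\sigma O_2$ if the response of $O_1$ occurs before the invocation of $O_2$. An execution is well-formed if each client's subsequence is sequential (each invocation immediately followed by its matching response). The register is atomic if for every well-formed execution $\sigma$ there is a sequential permutation $\pi$ of all its operations such that (i) if $O_1 \prec_\sigma O_2$ then $O_1$ appears before $O_2$ in $\pi$, and (ii) each read returns the value written by the latest preceding write in $\pi$. *)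

(* Defs.v *)
From mathcomp Require Import all_boot.
Set Implicit Arguments. Unset Strict Implicit. Unset Printing Implicit Defensive.

Section Model.
Variables (S R W : nat) (V : Type).

Definition client : Type := ('I_W + 'I_R)%type.

(* A write(v) is one round-trip: send w_send to every server, wait for
   replies from S-t servers, then compute the new local state (w_end).
   A read is one or two round-trips: send r_send1, wait for S-t replies,
   r_end1 either returns a value (Some v) or goes on with a second
   round-trip (r_send2 / r_end2) and then returns. *)
Record Impl : Type := {
  SState : Type; WState : Type; RState : Type; Msg : Type; Reply : Type;
  s_init : 'I_S -> SState;
  s_recv : 'I_S -> SState -> client -> Msg -> SState * Reply;
  w_init : 'I_W -> WState;
  w_send : 'I_W -> WState -> V -> 'I_S -> Msg;
  w_end  : 'I_W -> WState -> V -> ('I_S -> option Reply) -> WState;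
  r_init : 'I_R -> RState;
  r_send1 : 'I_R -> RState -> 'I_S -> Msg;
  r_end1  : 'I_R -> RState -> ('I_S -> option Reply) -> RState * option V;
  r_send2 : 'I_R -> RState -> 'I_S -> Msg;
  r_end2  : 'I_R -> RState -> ('I_S -> option Reply) -> RState * V }.
Arguments s_init : clear implicits.  Arguments s_recv : clear implicits.
Arguments w_init : clear implicits.  Arguments w_send : clear implicits.
Arguments w_end : clear implicits.   Arguments r_init : clear implicits.
Arguments r_send1 : clear implicits. Arguments r_end1 : clear implicits.
Arguments r_send2 : clear implicits. Arguments r_end2 : clear implicits.

Inductive Event : Type :=
  | InvW of 'I_W & V | RespW of 'I_W | InvR of 'I_R | RespR of 'I_R & V.

Definition evt (h : seq Event) (i : nat) : option Event := nth None (map Some h) i.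

Definition oclient (e : option Event) : option client :=
  match e with
  | Some (InvW w _) | Some (RespW w) => Some (inl w)
  | Some (InvR r) | Some (RespR r _) => Some (inr r)
  | None => None
  end.

Definition is_inv (e : option Event) : bool :=
  match e with Some (InvW _ _) | Some (InvR _) => true | _ => false end.
Definition is_resp (e : option Event) : bool :=
  match e with Some (RespW _) | Some (RespR _ _) => true | _ => false end.
Definition is_read (e : option Event) : bool :=
  match e with Some (InvR _) => true | _ => false end.

Definition resp (h : seq Event) (i j : nat) : Prop :=
  [/\ i < j, is_inv (evt h i), is_resp (evt h j),
      oclient (evt h j) = oclient (evt h i) &
      forall k, i < k < j -> oclient (evt h k) <> oclient (evt h i)].

Definition precedes (h : seq Event) (i j : nat) : Prop :=
  exists k, resp h i k /\ k < j.

Definition last_write (v0 : V) (h : seq Event) (l : seq nat) : V :=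
  foldl (fun acc k => if evt h k is Some (InvW _ v) then v else acc) v0 l.

(* Operations are identified by the index of their invocation event.
   pi is the linearization: it contains every complete operation and
   possibly some pending writes (pending reads have no effect). *)
Definition atomic (v0 : V) (h : seq Event) : Prop :=
  exists pi : seq nat,
  [/\ uniq pi,
      (forall i, i \in pi -> is_inv (evt h i)),
      (forall i j, resp h i j -> i \in pi),
      (forall i, i \in pi -> is_read (evt h i) -> exists j, resp h i j) &
      (forall i j, i \in pi -> j \in pi -> precedes h i j ->
                   index i pi < index j pi)] /\
      (forall i j r v, i \in pi -> resp h i j -> evt h j = Some (RespR r v) ->
                   v = last_write v0 h (take (index i pi) pi)).

Section Exec.
Variables (t : nat) (I : Impl).

Definition replies : Type := 'I_S -> option (Reply I).

Inductive WMode : Type := WIdle | WBusy of V & nat & replies.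
Inductive RMode : Type := RIdle | RPh1 of nat & replies | RPh2 of nat & replies.

Definition upd (A : eqType) (B : Type) (f : A -> B) (a : A) (b : B) : A -> B :=
  fun x => if x == a then b else f x.

Definition nrep (rep : replies) : nat := #|[pred s : 'I_S | isSome (rep s)]|.

Definition quorum (rep : replies) : bool := S - t <= nrep rep.

Definition no_rep : replies := fun _ => None.

Definition addrep (rep : replies) (s : 'I_S) (x : Reply I) : replies :=
  if rep s is None then
    (if nrep rep < S - t then upd rep s (Some x) else rep)
  else rep.

Definition wdeliver (m : WMode) (k : nat) (s : 'I_S) (x : Reply I) : WMode :=
  match m with
  | WBusy v k' rep => if k' == k then WBusy v k' (addrep rep s x) else m
  | _ => m end.
Definition rdeliver (m : RMode) (k : nat) (s : 'I_S) (x : Reply I) : RMode :=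
  match m with
  | RPh1 k' rep => if k' == k then RPh1 k' (addrep rep s x) else m
  | RPh2 k' rep => if k' == k then RPh2 k' (addrep rep s x) else m
  | _ => m end.

(* Global configuration: server states, client local states and modes,
   messages in transit (tagged with the round identifier), a counter
   giving fresh round identifiers, and the history of register events. *)
Record Config : Type := mkConfig {
  c_srv : 'I_S -> SState I;
  c_wst : 'I_W -> WState I; c_wmode : 'I_W -> WMode;
  c_rst : 'I_R -> RState I; c_rmode : 'I_R -> RMode;
  c_req : seq ('I_S * client * nat * Msg I);
  c_rep : seq (client * 'I_S * nat * Reply I);
  c_tick : nat;
  c_hist : seq Event }.

Definition init_config : Config :=
  mkConfig (s_init I) (w_init I) (fun _ => WIdle) (r_init I) (fun _ => RIdle)
           [::] [::] 0 [::].

Definition bcast (c : client) (k : nat) (f : 'I_S -> Msg I)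
  : seq ('I_S * client * nat * Msg I) :=
  [seq (s, c, k, f s) | s <- enum 'I_S].

Inductive step : Config -> Config -> Prop :=
  | st_inv_write C w v :
      c_wmode C w = WIdle ->
      step C (mkConfig (c_srv C) (c_wst C)
                (upd (c_wmode C) w (WBusy v (c_tick C) no_rep))
                (c_rst C) (c_rmode C)
                (c_req C ++ bcast (inl w) (c_tick C) (w_send I w (c_wst C w) v))
                (c_rep C) (c_tick C).+1 (rcons (c_hist C) (InvW w v)))
  | st_end_write C w v k rep :
      c_wmode C w = WBusy v k rep -> quorum rep ->
      step C (mkConfig (c_srv C) (upd (c_wst C) w (w_end I w (c_wst C w) v rep))
                (upd (c_wmode C) w WIdle)
                (c_rst C) (c_rmode C) (c_req C) (c_rep C) (c_tick C)
                (rcons (c_hist C) (RespW w)))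
  | st_inv_read C r :
      c_rmode C r = RIdle ->
      step C (mkConfig (c_srv C) (c_wst C) (c_wmode C)
                (c_rst C) (upd (c_rmode C) r (RPh1 (c_tick C) no_rep))
                (c_req C ++ bcast (inr r) (c_tick C) (r_send1 I r (c_rst C r)))
                (c_rep C) (c_tick C).+1 (rcons (c_hist C) (InvR r)))
  | st_end_read1_ret C r k rep st v :
      c_rmode C r = RPh1 k rep -> quorum rep ->
      r_end1 I r (c_rst C r) rep = (st, Some v) ->
      step C (mkConfig (c_srv C) (c_wst C) (c_wmode C)
                (upd (c_rst C) r st) (upd (c_rmode C) r RIdle)
                (c_req C) (c_rep C) (c_tick C) (rcons (c_hist C) (RespR r v)))
  | st_end_read1_cont C r k rep st :
      c_rmode C r = RPh1 k rep -> quorum rep ->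
      r_end1 I r (c_rst C r) rep = (st, None) ->
      step C (mkConfig (c_srv C) (c_wst C) (c_wmode C)
                (upd (c_rst C) r st) (upd (c_rmode C) r (RPh2 (c_tick C) no_rep))
                (c_req C ++ bcast (inr r) (c_tick C) (r_send2 I r st))
                (c_rep C) (c_tick C).+1 (c_hist C))
  | st_end_read2 C r k rep st v :
      c_rmode C r = RPh2 k rep -> quorum rep ->
      r_end2 I r (c_rst C r) rep = (st, v) ->
      step C (mkConfig (c_srv C) (c_wst C) (c_wmode C)
                (upd (c_rst C) r st) (upd (c_rmode C) r RIdle)
                (c_req C) (c_rep C) (c_tick C) (rcons (c_hist C) (RespR r v)))
  | st_server C l1 l2 s c k m st x :
      c_req C = l1 ++ (s, c, k, m) :: l2 ->
      s_recv I s (c_srv C s) c m = (st, x) ->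
      step C (mkConfig (upd (c_srv C) s st) (c_wst C) (c_wmode C)
                (c_rst C) (c_rmode C) (l1 ++ l2)
                (c_rep C ++ [:: (c, s, k, x)]) (c_tick C) (c_hist C))
  | st_client_w C l1 l2 w s k x :
      c_rep C = l1 ++ (inl w, s, k, x) :: l2 ->
      step C (mkConfig (c_srv C) (c_wst C)
                (upd (c_wmode C) w (wdeliver (c_wmode C w) k s x))
                (c_rst C) (c_rmode C) (c_req C) (l1 ++ l2) (c_tick C) (c_hist C))
  | st_client_r C l1 l2 r s k x :
      c_rep C = l1 ++ (inr r, s, k, x) :: l2 ->
      step C (mkConfig (c_srv C) (c_wst C) (c_wmode C)
                (c_rst C) (upd (c_rmode C) r (rdeliver (c_rmode C r) k s x))
                (c_req C) (l1 ++ l2) (c_tick C) (c_hist C)).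

Inductive reachable : Config -> Prop :=
  | reach0 : reachable init_config
  | reachS C C' : reachable C -> step C C' -> reachable C'.

Definition atomic_impl (v0 : V) : Prop :=
  forall C, reachable C -> atomic v0 (c_hist C).

End Exec.
End Model.

(* Main.v *)
Require Import Defs.
From mathcomp Require Import all_boot.
From Stdlib Require Import FunctionalExtensionality.
Set Implicit Arguments. Unset Strict Implicit. Unset Printing Implicit Defensive.

Section Gen.
Variables (S R W : nat) (V : Type) (t : nat) (I : Impl S R W V).
Notation reach := (@reachable S R W V t I).
Notation cfg := (Config I).

Local Notation same_cl C C' :=
  ([/\ c_wst C' = c_wst C, c_wmode C' = c_wmode C, c_rst C' = c_rst C,
      c_tick C' = c_tick C & c_hist C' = c_hist C]).

Lemma upd_same (A : eqType) B (f : A -> B) a : upd f a (f a) = f.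
Proof. by apply: functional_extensionality => x; rewrite /upd; case: eqP => // ->. Qed.

Lemma upd_upd (A : eqType) B (f : A -> B) a b c : upd (upd f a b) a c = upd f a c.
Proof. by apply: functional_extensionality => x; rewrite /upd; case: eqP. Qed.

Lemma upd_eq (A : eqType) B (f : A -> B) a b : upd f a b a = b.
Proof. by rewrite /upd eqxx. Qed.

Lemma upd_neq (A : eqType) B (f : A -> B) a b x : x != a -> upd f a b x = f x.
Proof. by rewrite /upd => /negbTE ->. Qed.

Lemma proc_gen (c : client R W) k (f : 'I_S -> Msg I) (p : pred 'I_S) l :
  uniq l -> forall J rest (C : cfg), reach C ->
  c_req C = J ++ [seq (s, c, k, f s) | s <- l] ++ rest ->
  exists C', reach C' /\ [/\
    c_srv C' = (fun x => if (x \in l) && p x then (s_recv x (c_srv C x) c (f x)).1 else c_srv C x),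
    c_req C' = J ++ [seq (s, c, k, f s) | s <- [seq s <- l | ~~ p s]] ++ rest,
    c_rep C' = c_rep C ++ [seq (c, s, k, (s_recv s (c_srv C s) c (f s)).2) | s <- [seq s <- l | p s]],
    c_rmode C' = c_rmode C & same_cl C C'].
Proof.
elim: l => [|x l IH] /= Hu J rest C HC Hreq.
  exists C; split => //; split => //.
  all: try by [].
  all: try by rewrite cats0.
  all: try by apply: functional_extensionality.
move: Hu => /andP [Hx Hu].
case Hp: (p x).
- case Hr: (s_recv x (c_srv C x) c (f x)) => [st y].
  have HC1 := reachS HC (st_server t Hreq Hr).
  have [C' [R' [Hs Hq Hp' Hm [E1 E2 E3 E4 E5]]]] := IH Hu J rest _ HC1 erefl.
  exists C'; split => //; split => //=.
  + rewrite Hs /=; apply: functional_extensionality => z.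
    rewrite inE /upd; case: (z =P x) => [->|Hzx] /=; first by rewrite (negbTE Hx) Hp Hr.
    by [].
  + rewrite Hp' /= -catA /= Hr; congr (_ ++ (_ :: _)).
    apply/eq_in_map => z /=; rewrite mem_filter => /andP [_ Hz].
    rewrite /upd; case: (z =P x) => [Ezx|//]; by rewrite -Ezx Hz in Hx.
- have Hreq' : c_req C = rcons J (x, c, k, f x) ++ [seq (s, c, k, f s) | s <- l] ++ rest
    by rewrite Hreq cat_rcons.
  have [C' [R' [Hs Hq Hp' Hm HS]]] := IH Hu _ rest _ HC Hreq'.
  exists C'; split => //; split => //.
  + rewrite Hs; apply: functional_extensionality => z.
    rewrite inE; case: (z =P x) => [->|] /=; first by rewrite (negbTE Hx) Hp.
    by [].
  + by rewrite Hq cat_rcons.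
Qed.

Lemma deliv_r (r : 'I_R) k (f : 'I_S -> Reply I) (p : pred 'I_S) l :
  forall J rest (C : cfg), reach C ->
  c_rep C = J ++ [seq ((inr r : client R W), s, k, f s) | s <- l] ++ rest ->
  exists C', reach C' /\ [/\ c_srv C' = c_srv C, c_req C' = c_req C,
    c_rep C' = J ++ [seq ((inr r : client R W), s, k, f s) | s <- [seq s <- l | ~~ p s]] ++ rest,
    c_rmode C' = upd (c_rmode C) r (foldl (fun m s => rdeliver t m k s (f s)) (c_rmode C r) [seq s <- l | p s])
    & same_cl C C'].
Proof.
elim: l => [|x l IH] /= J rest C HC Hrep.
  by exists C; split => //; split => //; rewrite upd_same.
case Hp: (p x).
- have HC1 := reachS HC (st_client_r t Hrep).
  have [C' [R' [Hs Hq Hp' Hm [E1 E2 E3 E4 E5]]]] := IH J rest _ HC1 erefl.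
  exists C'; split => //; split => //=.
  + by rewrite Hm /= upd_upd upd_eq.
- have Hrep' : c_rep C = rcons J ((inr r : client R W), x, k, f x) ++ [seq ((inr r : client R W), s, k, f s) | s <- l] ++ rest
    by rewrite Hrep cat_rcons.
  have [C' [R' [Hs Hq Hp' Hm HS]]] := IH _ rest _ HC Hrep'.
  by exists C'; split => //; split => //; rewrite Hp' cat_rcons.
Qed.

Lemma deliv_w (w : 'I_W) k (f : 'I_S -> Reply I) (p : pred 'I_S) l :
  forall J rest (C : cfg), reach C ->
  c_rep C = J ++ [seq ((inl w : client R W), s, k, f s) | s <- l] ++ rest ->
  exists C', reach C' /\ [/\ c_srv C' = c_srv C, c_req C' = c_req C,
    c_rep C' = J ++ [seq ((inl w : client R W), s, k, f s) | s <- [seq s <- l | ~~ p s]] ++ rest,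
    c_wmode C' = upd (c_wmode C) w (foldl (fun m s => wdeliver t m k s (f s)) (c_wmode C w) [seq s <- l | p s])
    & [/\ c_wst C' = c_wst C, c_rmode C' = c_rmode C, c_rst C' = c_rst C,
      c_tick C' = c_tick C & c_hist C' = c_hist C]].
Proof.
elim: l => [|x l IH] /= J rest C HC Hrep.
  by exists C; split => //; split => //; rewrite upd_same.
case Hp: (p x).
- have HC1 := reachS HC (st_client_w t Hrep).
  have [C' [R' [Hs Hq Hp' Hm [E1 E2 E3 E4 E5]]]] := IH J rest _ HC1 erefl.
  exists C'; split => //; split => //=.
  + by rewrite Hm /= upd_upd upd_eq.
- have Hrep' : c_rep C = rcons J ((inl w : client R W), x, k, f x) ++ [seq ((inl w : client R W), s, k, f s) | s <- l] ++ rest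
    by rewrite Hrep cat_rcons.
  have [C' [R' [Hs Hq Hp' Hm HS]]] := IH _ rest _ HC Hrep'.
  by exists C'; split => //; split => //; rewrite Hp' cat_rcons.
Qed.

Definition recl (l : seq 'I_S) (f : 'I_S -> Reply I) (rep : replies I) : replies I :=
  foldl (fun rep s => addrep t rep s (f s)) rep l.

Lemma fold_rdel1 k f l rep :
  foldl (fun m s => rdeliver t m k s (f s)) (RPh1 k rep) l = RPh1 k (recl l f rep).
Proof. by elim: l rep => //= x l IH rep; rewrite eqxx IH. Qed.
Lemma fold_rdel2 k f l rep :
  foldl (fun m s => rdeliver t m k s (f s)) (RPh2 k rep) l = RPh2 k (recl l f rep).
Proof. by elim: l rep => //= x l IH rep; rewrite eqxx IH. Qed.
Lemma fold_wdel v k f l rep :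
  foldl (fun m s => wdeliver t m k s (f s)) (WBusy v k rep) l = WBusy v k (recl l f rep).
Proof. by elim: l rep => //= x l IH rep; rewrite eqxx IH. Qed.

Lemma recl_eq l f g rep : {in l, f =1 g} -> recl l f rep = recl l g rep.
Proof.
elim: l rep => //= x l IH rep H; rewrite /recl /= H ?mem_head //.
by apply: IH => y Hy; apply: H; rewrite inE Hy orbT.
Qed.

Lemma nrep_upd (rep : replies I) s y : rep s = None -> nrep (upd rep s (Some y)) = (nrep rep).+1.
Proof.
move=> Hs; rewrite /nrep (cardD1 s) inE upd_eq /=; congr (_.+1).
apply: eq_card => z; rewrite !inE /upd; case: (z =P s) => [->|] //=.
by rewrite Hs.
Qed.

Lemma recl_nrep l f (rep : replies I) : uniq l -> (forall s, s \in l -> rep s = None) ->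
  minn (S - t) (nrep rep + size l) <= nrep (recl l f rep).
Proof.
elim: l rep => /= [|x l IH] rep; first by rewrite addn0 geq_minr.
move=> /andP [Hx Hu] Hn; rewrite /recl /=.
rewrite /addrep (Hn x (mem_head _ _)).
case: ltnP => Hlt.
- apply: leq_trans (IH _ Hu _) => [|y Hy].
  + by rewrite nrep_upd ?(Hn x (mem_head _ _)) // addSnnS.
  + rewrite /upd; case: (y =P x) => [Eyx|_]; first by rewrite -Eyx Hy in Hx.
    by apply: Hn; rewrite inE Hy orbT.
- apply: leq_trans (IH _ Hu _) => [|y Hy]; last by apply: Hn; rewrite inE Hy orbT.
  by rewrite (minn_idPl (leq_trans Hlt (leq_addr _ _))) (minn_idPl (leq_trans Hlt (leq_addr _ _))).
Qed.

Lemma recl_quorum l f : uniq l -> S - t <= size l -> quorum t (recl l f (no_rep I)).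
Proof.
move=> Hu Hs; rewrite /quorum.
have := @recl_nrep l f (no_rep I) Hu (fun _ _ => erefl).
have -> : nrep (no_rep I) = 0 by rewrite /nrep; apply: eq_card0.
by rewrite add0n (minn_idPl Hs).
Qed.

End Gen.

Section Atom.
Variables (R W : nat) (V : Type) (v0 : V).

Ltac solve_resp :=
  split => //; move=> [|[|[|[|[|[|[|[|k]]]]]]]] //= _ [E]; subst;
  match goal with H : is_true (?a != ?a) |- _ => by rewrite eqxx in H end.

Definition Lperm := ltac:(let x := eval vm_compute in (permutations [:: 0;1;4;5]) in exact x).
Definition Lperm2 := ltac:(let x := eval vm_compute in (permutations [:: 0;2;4;5]) in exact x).

Lemma atomic_conc (wa wb : 'I_W) (r1 r2 : 'I_R) (va vb x y : V) :
  wa != wb -> r1 != r2 ->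
  atomic v0 [:: InvW R wa va; InvW R wb vb; RespW R V wa; RespW R V wb;
                InvR W V r1; InvR W V r2; RespR W r1 x; RespR W r2 y] -> x = y.
Proof.
move=> Hw Hr; set h := [:: _; _; _; _; _; _; _; _]; case=> pi [[Hu Hinv Hresp Hrd Hprec] Hval].
have R02 : resp h 0 2 by solve_resp.
have R13 : resp h 1 3 by solve_resp.
have R46 : resp h 4 6 by solve_resp.
have R57 : resp h 5 7 by solve_resp.
have I0 := Hresp _ _ R02. have I1 := Hresp _ _ R13.
have I4 := Hresp _ _ R46. have I5 := Hresp _ _ R57.
have P04 := Hprec 0 4 I0 I4 (ex_intro _ 2 (conj R02 erefl)).
have P14 := Hprec 1 4 I1 I4 (ex_intro _ 3 (conj R13 erefl)).
have P05 := Hprec 0 5 I0 I5 (ex_intro _ 2 (conj R02 erefl)).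
have P15 := Hprec 1 5 I1 I5 (ex_intro _ 3 (conj R13 erefl)).
have X := Hval 4 6 r1 x I4 R46 erefl.
have Y := Hval 5 7 r2 y I5 R57 erefl.
have Hsub : forall i, i \in pi -> i \in [:: 0; 1; 4; 5].
  move=> j Hj; have := Hinv j Hj; rewrite /evt /h.
  by case: j {Hj} => [|[|[|[|[|[|[|[|j]]]]]]]] //=; rewrite nth_nil.
have Hpe : perm_eq pi [:: 0; 1; 4; 5].
  apply: uniq_perm => // i; apply/idP/idP => [/Hsub //|].
  by rewrite !inE => /or4P [] /eqP ->.
move: P04 P14 P05 P15 X Y.
have : pi \in Lperm by move: Hpe; rewrite -mem_permutations; apply.
rewrite /Lperm !inE.
repeat (case/orP => [/eqP -> /=|]; first by (try done); move=> _ _ _ _ -> ->).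
by move=> /eqP -> /=; (try done); move=> _ _ _ _ -> ->.
Qed.

Lemma atomic_seq (wa wb : 'I_W) (r1 r2 : 'I_R) (va vb x y : V) :
  r1 != r2 ->
  atomic v0 [:: InvW R wa va; RespW R V wa; InvW R wb vb; RespW R V wb;
                InvR W V r1; InvR W V r2; RespR W r1 x; RespR W r2 y] -> x = vb.
Proof.
move=> Hr; set h := [:: _; _; _; _; _; _; _; _]; case=> pi [[Hu Hinv Hresp Hrd Hprec] Hval].
have R01 : resp h 0 1 by solve_resp.
have R23 : resp h 2 3 by solve_resp.
have R46 : resp h 4 6 by solve_resp.
have R57 : resp h 5 7 by solve_resp.
have I0 := Hresp _ _ R01. have I2 := Hresp _ _ R23.
have I4 := Hresp _ _ R46. have I5 := Hresp _ _ R57.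
have P02 := Hprec 0 2 I0 I2 (ex_intro _ 1 (conj R01 erefl)).
have P04 := Hprec 0 4 I0 I4 (ex_intro _ 1 (conj R01 erefl)).
have P24 := Hprec 2 4 I2 I4 (ex_intro _ 3 (conj R23 erefl)).
have X := Hval 4 6 r1 x I4 R46 erefl.
have Hsub : forall i, i \in pi -> i \in [:: 0; 2; 4; 5].
  move=> j Hj; have := Hinv j Hj; rewrite /evt /h.
  by case: j {Hj} => [|[|[|[|[|[|[|[|j]]]]]]]] //=; rewrite nth_nil.
have Hpe : perm_eq pi [:: 0; 2; 4; 5].
  apply: uniq_perm => // i; apply/idP/idP => [/Hsub //|].
  by rewrite !inE => /or4P [] /eqP ->.
move: P02 P04 P24 X.
have : pi \in Lperm2 by move: Hpe; rewrite -mem_permutations; apply.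
rewrite /Lperm2 !inE.
repeat (case/orP => [/eqP -> /=|]; first by (try done); move=> _ _ _ ->).
by move=> /eqP -> /=; (try done); move=> _ _ _ ->.
Qed.
End Atom.

Section Main.
Variables (S R W : nat) (V : Type) (t : nat) (I : Impl S R W V).
Variables (w1 w2 : 'I_W) (r1 r2 : 'I_R) (v1 v2 : V).
Hypothesis Hw : w1 != w2.
Hypothesis Hr : r1 != r2.
Hypothesis Ht : 1 <= t.
Notation reach := (@reachable S R W V t I).
Notation cfg := (Config I).
Notation recl := (recl t).
Notation cr1 := (inr r1 : client R W).
Notation cr2 := (inr r2 : client R W).

Lemma filter_false (T : Type) (l : seq T) : [seq s <- l | false] = [::].
Proof. by elim: l. Qed.

Lemma filter_true (T : Type) (l : seq T) : [seq s <- l | true] = l.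
Proof. by elim: l => //= x l ->. Qed.

Lemma fold_rdel_eq k (f g : 'I_S -> Reply I) l m0 : {in l, f =1 g} ->
  foldl (fun m s => rdeliver t m k s (f s)) m0 l = foldl (fun m s => rdeliver t m k s (g s)) m0 l.
Proof.
elim: l m0 => //= x l IH m0 H; rewrite H ?mem_head //.
by apply: IH => y Hy; apply: H; rewrite inE Hy orbT.
Qed.

Definition R21 (s2 : 'I_S -> SState I) (f1 f2 : 'I_S -> Msg I) (b2 : bool) (P : pred 'I_S) s :=
  if b2 && ~~ P s then (s_recv s (s_recv s (s2 s) cr2 (f2 s)).1 cr1 (f1 s)).2
  else (s_recv s (s2 s) cr1 (f1 s)).2.
Definition R22 (s2 : 'I_S -> SState I) (f1 f2 : 'I_S -> Msg I) (b1 : bool) (P : pred 'I_S) s :=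
  if b1 && P s then (s_recv s (s_recv s (s2 s) cr1 (f1 s)).1 cr2 (f2 s)).2
  else (s_recv s (s2 s) cr2 (f2 s)).2.
Definition ord2 (P : pred 'I_S) d :=
  [seq s <- [seq s <- enum 'I_S | ~~ P s] | s != d] ++ [seq s <- [seq s <- enum 'I_S | ~~ ~~ P s] | s != d].
Definition lst (b : bool) := if b then enum 'I_S else [::].

Lemma lst_uniq b : uniq (lst b).
Proof. by case: b; rewrite /lst ?enum_uniq. Qed.
Lemma mem_lst b x : (x \in lst b) = b.
Proof. by case: b; rewrite /lst ?mem_enum. Qed.

Lemma round2 (b1 b2 : bool) k1 k2 f1 f2 P c d (D : cfg) :
  reach D ->
  c_req D = [seq (s, cr1, k1, f1 s) | s <- lst b1] ++ [seq (s, cr2, k2, f2 s) | s <- lst b2] ->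
  exists D', reach D' /\ [/\
    c_rmode D' r1 = foldl (fun m s => rdeliver t m k1 s (R21 (c_srv D) f1 f2 b2 P s)) (c_rmode D r1)
                      [seq s <- lst b1 | s != c],
    c_rmode D' r2 = foldl (fun m s => rdeliver t m k2 s (R22 (c_srv D) f1 f2 b1 P s)) (c_rmode D r2)
                      (if b2 then ord2 P d else [::]),
    c_rst D' = c_rst D, c_tick D' = c_tick D & c_hist D' = c_hist D].
Proof.
move=> HD Hreq.
have Hq0 : c_req D = [seq (s, cr1, k1, f1 s) | s <- lst b1] ++ [seq (s, cr2, k2, f2 s) | s <- lst b2] ++ [::] by rewrite Hreq cats0.
have [D1 [HD1 [S1 Q1 P1 M1 [_ _ T1 K1 H1]]]] :=
  @proc_gen _ _ _ _ _ _ _ _ _ (fun s => ~~ P s) _ (lst_uniq b2) _ [::] _ HD Hq0.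
have [D2 [HD2 [S2 Q2 P2 M2 [_ _ T2 K2 H2]]]] :=
  @proc_gen _ _ _ _ _ _ _ _ _ predT _ (lst_uniq b1) [::] _ _ HD1 Q1.
rewrite /= filter_false /= in Q2.
have Q2' : c_req D2 = [::] ++ [seq (s, cr2, k2, f2 s) | s <- [seq s <- lst b2 | ~~ ~~ P s]] ++ [::] by rewrite Q2 cats0.
have [D3 [HD3 [S3 Q3 P3 M3 [_ _ T3 K3 H3]]]] :=
  @proc_gen _ _ _ _ _ _ _ _ _ predT _ (filter_uniq _ (lst_uniq b2)) [::] [::] _ HD2 Q2'.
set F1 := fun s => (s_recv s (c_srv D1 s) cr1 (f1 s)).2.
set F2a := fun s => (s_recv s (c_srv D s) cr2 (f2 s)).2.
set F2c := fun s => (s_recv s (c_srv D2 s) cr2 (f2 s)).2.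
set A := [seq (cr2, s, k2, F2a s) | s <- [seq s <- lst b2 | ~~ P s]].
set Cc := [seq (cr2, s, k2, F2c s) | s <- [seq s <- [seq s <- lst b2 | ~~ ~~ P s] | predT s]].
have E4 : c_rep D3 = (c_rep D ++ A) ++ [seq (cr1, s, k1, F1 s) | s <- lst b1] ++ Cc.
  by rewrite P3 P2 P1 filter_predT -!catA.
have [D4 [HD4 [S4 Q4 P4 M4 [_ _ T4 K4 H4]]]] :=
  @deliv_r _ _ _ _ _ _ r1 k1 F1 (fun s => s != c) _ _ _ _ HD3 E4.
set B' := [seq (cr1, s, k1, F1 s) | s <- [seq s <- lst b1 | ~~ (s != c)]].
have E5 : c_rep D4 = c_rep D ++ [seq (cr2, s, k2, F2a s) | s <- [seq s <- lst b2 | ~~ P s]] ++ (B' ++ Cc).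
  by rewrite P4 -!catA.
have [D5 [HD5 [S5 Q5 P5 M5 [_ _ T5 K5 H5]]]] :=
  @deliv_r _ _ _ _ _ _ r2 k2 F2a (fun s => s != d) _ _ _ _ HD4 E5.
set A' := [seq (cr2, s, k2, F2a s) | s <- [seq s <- [seq s <- lst b2 | ~~ P s] | ~~ (s != d)]].
have E6 : c_rep D5 = (c_rep D ++ A' ++ B') ++ [seq (cr2, s, k2, F2c s) | s <- [seq s <- [seq s <- lst b2 | ~~ ~~ P s] | predT s]] ++ [::].
  by rewrite P5 -!catA cats0.
have [D6 [HD6 [S6 Q6 P6 M6 [_ _ T6 K6 H6]]]] :=
  @deliv_r _ _ _ _ _ _ r2 k2 F2c (fun s => s != d) _ _ _ _ HD5 E6.
exists D6; split => //; split.
- rewrite M6 upd_neq // M5 upd_neq // M4 upd_eq M3 M2 M1.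
  apply: fold_rdel_eq => s _; rewrite /F1 S1 /R21 /= mem_lst.
  by case: (b2 && ~~ P s).
- rewrite M6 upd_eq M5 upd_eq M4 upd_neq 1?eq_sym // M3 M2 M1.
  case Eb2: b2; rewrite /lst /=; first last; first by [].
  rewrite /ord2 foldl_cat filter_true.
  set L1 := [seq s <- [seq s <- enum 'I_S | ~~ P s] | s != d].
  set L2 := [seq s <- [seq s <- enum 'I_S | ~~ ~~ P s] | s != d].
  set G := fun m s => rdeliver t m k2 s (R22 (c_srv D) f1 f2 b1 P s).
  have -> : foldl (fun m s => rdeliver t m k2 s (F2a s)) (c_rmode D r2) L1 = foldl G (c_rmode D r2) L1.
    apply: fold_rdel_eq => s; rewrite !mem_filter => /andP [_ /andP [HP _]].
    by rewrite /F2a /R22 (negbTE HP) andbF.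
  apply: fold_rdel_eq => s; rewrite !mem_filter => /andP [_ /andP [HP _]].
  rewrite negbK in HP.
  by rewrite /F2c S2 S1 /R22 /= HP mem_lst andbF andbT /=; by case: ifP.
- by rewrite T6 T5 T4 T3 T2 T1.
- by rewrite K6 K5 K4 K3 K2 K1.
- by rewrite H6 H5 H4 H3 H2 H1.
Qed.
Definition skp (a : 'I_S) := [seq s <- enum 'I_S | s != a].

Lemma skp_uniq a : uniq (skp a).
Proof. exact: filter_uniq (enum_uniq _). Qed.

Lemma skp_size a : size (skp a) = S.-1.
Proof.
have -> : skp a = rem a (enum 'I_S) by rewrite rem_filter ?enum_uniq.
by rewrite size_rem ?mem_enum // size_enum_ord.
Qed.

Lemma ord2_perm P d : perm_eq (ord2 P d) (skp d).
Proof.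
have E : forall (b : pred 'I_S), [seq s <- [seq s <- enum 'I_S | b s] | s != d] = [seq s <- skp d | b s].
  move=> b; rewrite -!filter_predI; apply: eq_filter => x /=.
  by rewrite (andbC (x != d)).
rewrite /ord2 (E (fun s => ~~ P s)) (E (fun s => ~~ ~~ P s)).
by rewrite (perm_filterC (fun s => ~~ P s)).
Qed.

Lemma qS : S - t <= S.-1.
Proof. by rewrite -subn1 leq_sub2l. Qed.

Lemma skp_quorum a f : quorum t (recl (skp a) f (no_rep I)).
Proof. by apply: recl_quorum; rewrite ?skp_uniq ?skp_size ?qS. Qed.

Lemma ord2_quorum P d f : quorum t (recl (ord2 P d) f (no_rep I)).
Proof.
by apply: recl_quorum; rewrite ?(perm_uniq (ord2_perm P d)) ?(perm_size (ord2_perm P d)) ?skp_uniq ?skp_size ?qS.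
Qed.

Lemma inv_read_ex (C : cfg) r : reach C -> c_rmode C r = RIdle I ->
  exists C', reach C' /\ [/\ c_srv C' = c_srv C,
    c_req C' = c_req C ++ bcast (inr r) (c_tick C) (r_send1 r (c_rst C r)),
    c_rep C' = c_rep C, c_rmode C' = upd (c_rmode C) r (RPh1 (c_tick C) (no_rep I))
    & [/\ c_rst C' = c_rst C, c_tick C' = (c_tick C).+1 & c_hist C' = rcons (c_hist C) (InvR W V r)]].
Proof. by move=> HC H; eexists; split; [exact: reachS HC (st_inv_read t H)|]. Qed.

Lemma end1_ret_ex (C : cfg) r k rep st v : reach C -> c_rmode C r = RPh1 k rep -> quorum t rep ->
  r_end1 r (c_rst C r) rep = (st, Some v) ->
  exists C', reach C' /\ [/\ c_srv C' = c_srv C, c_req C' = c_req C,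
    c_rep C' = c_rep C, c_rmode C' = upd (c_rmode C) r (RIdle I)
    & [/\ c_rst C' = upd (c_rst C) r st, c_tick C' = c_tick C & c_hist C' = rcons (c_hist C) (RespR W r v)]].
Proof. by move=> HC H1 H2 H3; eexists; split; [exact: reachS HC (st_end_read1_ret H1 H2 H3)|]. Qed.

Lemma end1_cont_ex (C : cfg) r k rep st : reach C -> c_rmode C r = RPh1 k rep -> quorum t rep ->
  r_end1 r (c_rst C r) rep = (st, None) ->
  exists C', reach C' /\ [/\ c_srv C' = c_srv C,
    c_req C' = c_req C ++ bcast (inr r) (c_tick C) (r_send2 r st),
    c_rep C' = c_rep C, c_rmode C' = upd (c_rmode C) r (RPh2 (c_tick C) (no_rep I))
    & [/\ c_rst C' = upd (c_rst C) r st, c_tick C' = (c_tick C).+1 & c_hist C' = c_hist C]].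
Proof. by move=> HC H1 H2 H3; eexists; split; [exact: reachS HC (st_end_read1_cont H1 H2 H3)|]. Qed.

Lemma end2_ex (C : cfg) r k rep : reach C -> c_rmode C r = RPh2 k rep -> quorum t rep ->
  exists C', reach C' /\ [/\ c_rmode C' = upd (c_rmode C) r (RIdle I),
    c_rst C' = upd (c_rst C) r (r_end2 r (c_rst C r) rep).1,
    c_tick C' = c_tick C & c_hist C' = rcons (c_hist C) (RespR W r (r_end2 r (c_rst C r) rep).2)].
Proof.
move=> HC H1 H2; eexists; split; first exact: reachS HC (st_end_read2 H1 H2 (surjective_pairing _)).
by [].
Qed.

Definition M11 s := r_send1 r1 (r_init I r1) s.
Definition M12 s := r_send1 r2 (r_init I r2) s.
Definition sig1 (sg : 'I_S -> SState I) s := (s_recv s (sg s) cr1 (M11 s)).1.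
Definition rho11 (sg : 'I_S -> SState I) s := (s_recv s (sg s) cr1 (M11 s)).2.
Definition sig2 (sg : 'I_S -> SState I) s := (s_recv s (sig1 sg s) cr2 (M12 s)).1.
Definition rho12 (sg : 'I_S -> SState I) s := (s_recv s (sig1 sg s) cr2 (M12 s)).2.

Lemma read_phase1 (C : cfg) a q : reach C -> c_req C = [::] -> c_rep C = [::] ->
  c_rst C r1 = r_init I r1 -> c_rst C r2 = r_init I r2 -> c_rmode C r1 = RIdle I -> c_rmode C r2 = RIdle I ->
  exists C6, reach C6 /\ [/\ c_srv C6 = sig2 (c_srv C), c_req C6 = [::],
    c_rmode C6 r1 = RPh1 (c_tick C) (recl (skp a) (rho11 (c_srv C)) (no_rep I)),
    c_rmode C6 r2 = RPh1 (c_tick C).+1 (recl (skp q) (rho12 (c_srv C)) (no_rep I))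
   & [/\ c_rst C6 = c_rst C, c_tick C6 = (c_tick C).+2 & c_hist C6 = c_hist C ++ [:: InvR W V r1; InvR W V r2]]].
Proof.
move=> HC Hq Hp Hs1 Hs2 Hm1 Hm2.
set sg := c_srv C.
have Hr' : r2 != r1 by rewrite eq_sym.
have [C1 [HC1 [S1 Q1 P1 M1 [T1 K1 H1]]]] := inv_read_ex HC Hm1.
have Hm2' : c_rmode C1 r2 = RIdle I by rewrite M1 upd_neq.
have [C2 [HC2 [S2 Q2 P2 M2 [T2 K2 H2]]]] := inv_read_ex HC1 Hm2'.
have EQ3 : c_req C2 = [::] ++ [seq (s, cr1, c_tick C, M11 s) | s <- enum 'I_S] ++
    [seq (s, cr2, (c_tick C).+1, M12 s) | s <- enum 'I_S].
  by rewrite Q2 Q1 Hq K1 T1 Hs1 Hs2.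
have [C3 [HC3 [S3 Q3 P3 M3 [_ _ T3 K3 H3]]]] :=
  @proc_gen _ _ _ _ _ _ _ _ _ predT _ (enum_uniq _) _ _ _ HC2 EQ3.
have EQ4 : c_req C3 = [::] ++ [seq (s, cr2, (c_tick C).+1, M12 s) | s <- enum 'I_S] ++ [::].
  by rewrite Q3 /= filter_false cats0.
have [C4 [HC4 [S4 Q4 P4 M4 [_ _ T4 K4 H4]]]] :=
  @proc_gen _ _ _ _ _ _ _ _ _ predT _ (enum_uniq _) _ _ _ HC3 EQ4.
have EQ5 : c_rep C4 = [::] ++ [seq (cr1, s, c_tick C, rho11 sg s) | s <- enum 'I_S] ++
   [seq (cr2, s, (c_tick C).+1, (s_recv s (c_srv C3 s) cr2 (M12 s)).2) | s <- enum 'I_S].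
  by rewrite P4 P3 P2 P1 Hp !filter_predT S2 S1.
have [C5 [HC5 [S5 Q5 P5 M5 [_ _ T5 K5 H5]]]] :=
  @deliv_r _ _ _ _ _ _ r1 (c_tick C) (rho11 sg) (fun s => s != a) _ _ _ _ HC4 EQ5.
have EQ6 : c_rep C5 = [seq (cr1, s, c_tick C, rho11 sg s) | s <- [seq s <- enum 'I_S | ~~ (s != a)]] ++
   [seq (cr2, s, (c_tick C).+1, rho12 sg s) | s <- enum 'I_S] ++ [::].
  rewrite P5 cats0 /=; congr (_ ++ _); apply: eq_map => s.
  by rewrite /rho12 S3 /= S2 S1 mem_enum.
have [C6 [HC6 [S6 Q6 P6 M6 [_ _ T6 K6 H6]]]] :=
  @deliv_r _ _ _ _ _ _ r2 (c_tick C).+1 (rho12 sg) (fun s => s != q) _ _ _ _ HC5 EQ6.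
exists C6; split => //; split.
- rewrite S6 S5 S4 S3 S2 S1; apply: functional_extensionality => x.
  by rewrite /= mem_enum.
- by rewrite Q6 Q5 Q4 /= filter_false.
- rewrite M6 upd_neq // M5 upd_eq M4 M3 M2 M1 upd_neq // upd_eq.
  exact: fold_rdel1.
- rewrite M6 upd_eq M5 upd_neq // M4 M3 M2 upd_eq K1.
  exact: fold_rdel1.
- split.
  + by rewrite T6 T5 T4 T3 T2 T1.
  + by rewrite K6 K5 K4 K3 K2 K1.
  + by rewrite H6 H5 H4 H3 H2 H1 -!cats1 -catA.
Qed.

Definition E1 (sg : 'I_S -> SState I) a := r_end1 r1 (r_init I r1) (recl (skp a) (rho11 sg) (no_rep I)).
Definition E2 (sg : 'I_S -> SState I) q := r_end1 r2 (r_init I r2) (recl (skp q) (rho12 sg) (no_rep I)).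
Definition cont1 sg a := if (E1 sg a).2 is None then true else false.
Definition cont2 sg q := if (E2 sg q).2 is None then true else false.
Definition M21 sg a s := r_send2 r1 (E1 sg a).1 s.
Definition M22 sg q s := r_send2 r2 (E2 sg q).1 s.
Definition val1 sg P a q c :=
  if (E1 sg a).2 is Some v then v else
  (r_end2 r1 (E1 sg a).1 (recl (skp c) (R21 (sig2 sg) (M21 sg a) (M22 sg q) (cont2 sg q) P) (no_rep I))).2.
Definition val2 sg P a q d :=
  if (E2 sg q).2 is Some v then v else
  (r_end2 r2 (E2 sg q).1 (recl (ord2 P d) (R22 (sig2 sg) (M21 sg a) (M22 sg q) (cont1 sg a) P) (no_rep I))).2.

Lemma read_phase (C : cfg) P a q c d : reach C -> c_req C = [::] -> c_rep C = [::] ->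
  c_rst C r1 = r_init I r1 -> c_rst C r2 = r_init I r2 -> c_rmode C r1 = RIdle I -> c_rmode C r2 = RIdle I ->
  exists C', reach C' /\ c_hist C' = c_hist C ++
    [:: InvR W V r1; InvR W V r2; RespR W r1 (val1 (c_srv C) P a q c); RespR W r2 (val2 (c_srv C) P a q d)].
Proof.
move=> HC Hq Hp Hs1 Hs2 Hm1 Hm2.
have [D [HD [DS DQ DM1 DM2 [DT DK DH]]]] := read_phase1 a q HC Hq Hp Hs1 Hs2 Hm1 Hm2.
set sg := c_srv C in DS DM1 DM2 *.
have Hr' : r2 != r1 by rewrite eq_sym.
have Q1 := skp_quorum a (rho11 sg).
have Q2 := skp_quorum q (rho12 sg).
rewrite /val1 /val2 /cont1 /cont2 /M21 /M22.
case E1e: (E1 sg a) => [st1 o1]; case E2e: (E2 sg q) => [st2 o2] /=.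
have F1 : r_end1 r1 (c_rst D r1) (recl (skp a) (rho11 sg) (no_rep I)) = (st1, o1) by rewrite DT Hs1.
case: o1 E1e F1 => [x|] E1e F1; case: o2 E2e => [y|] E2e /=.
- have [D1 [HD1 [_ _ _ M1' [T1' _ H1']]]] := end1_ret_ex HD DM1 Q1 F1.
  have DM2' : c_rmode D1 r2 = RPh1 (c_tick C).+1 (recl (skp q) (rho12 sg) (no_rep I)) by rewrite M1' upd_neq.
  have F2 : r_end1 r2 (c_rst D1 r2) (recl (skp q) (rho12 sg) (no_rep I)) = (st2, Some y)
    by rewrite T1' upd_neq // DT Hs2.
  have [D2 [HD2 [_ _ _ _ [_ _ H2']]]] := end1_ret_ex HD1 DM2' Q2 F2.
  by exists D2; split => //; rewrite H2' H1' DH -!cats1 -!catA.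
- have [D1 [HD1 [S1' Q1' _ M1' [T1' K1' H1']]]] := end1_ret_ex HD DM1 Q1 F1.
  have DM2' : c_rmode D1 r2 = RPh1 (c_tick C).+1 (recl (skp q) (rho12 sg) (no_rep I)) by rewrite M1' upd_neq.
  have F2 : r_end1 r2 (c_rst D1 r2) (recl (skp q) (rho12 sg) (no_rep I)) = (st2, None)
    by rewrite T1' upd_neq // DT Hs2.
  have [D2 [HD2 [S2' Q2' _ M2' [T2' K2' H2']]]] := end1_cont_ex HD1 DM2' Q2 F2.
  have EQ : c_req D2 = [seq (s, cr1, 0, r_send2 r1 st1 s) | s <- lst false] ++
                       [seq (s, cr2, c_tick D1, r_send2 r2 st2 s) | s <- lst true]
    by rewrite Q2' Q1' DQ.
  have [D3 [HD3 [_ M3' T3' K3' H3']]] := round2 P c d HD2 EQ.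
  rewrite M2' upd_eq fold_rdel2 S2' S1' DS in M3'.
  have [D4 [HD4 [_ _ _ H4']]] := end2_ex HD3 M3' (ord2_quorum _ _ _).
  exists D4; split => //; rewrite H4' H3' H2' H1' DH -!cats1 -!catA T3' T2' upd_eq.
  by [].
- have [D1 [HD1 [S1' Q1' _ M1' [T1' K1' H1']]]] := end1_cont_ex HD DM1 Q1 F1.
  have EQ : c_req D1 = [seq (s, cr1, c_tick D, r_send2 r1 st1 s) | s <- lst true] ++
                       [seq (s, cr2, 0, r_send2 r2 st2 s) | s <- lst false]
    by rewrite Q1' DQ /= cats0.
  have [D2 [HD2 [M2a M2b T2' K2' H2']]] := round2 P c d HD1 EQ.
  rewrite M1' upd_eq fold_rdel2 S1' DS in M2a.
  have [D3 [HD3 [M3' T3' _ H3']]] := end2_ex HD2 M2a (skp_quorum _ _).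
  have DM2' : c_rmode D3 r2 = RPh1 (c_tick C).+1 (recl (skp q) (rho12 sg) (no_rep I))
    by rewrite M3' upd_neq // M2b /= M1' upd_neq.
  have F2 : r_end1 r2 (c_rst D3 r2) (recl (skp q) (rho12 sg) (no_rep I)) = (st2, Some y)
    by rewrite T3' upd_neq // T2' T1' upd_neq // DT Hs2.
  have [D4 [HD4 [_ _ _ _ [_ _ H4']]]] := end1_ret_ex HD3 DM2' Q2 F2.
  exists D4; split => //; rewrite H4' H3' H2' H1' DH -!cats1 -!catA T2' T1' upd_eq.
  by [].
- have [D1 [HD1 [S1' Q1' _ M1' [T1' K1' H1']]]] := end1_cont_ex HD DM1 Q1 F1.
  have DM2' : c_rmode D1 r2 = RPh1 (c_tick C).+1 (recl (skp q) (rho12 sg) (no_rep I)) by rewrite M1' upd_neq.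
  have F2 : r_end1 r2 (c_rst D1 r2) (recl (skp q) (rho12 sg) (no_rep I)) = (st2, None)
    by rewrite T1' upd_neq // DT Hs2.
  have [D2 [HD2 [S2' Q2' _ M2' [T2' K2' H2']]]] := end1_cont_ex HD1 DM2' Q2 F2.
  have EQ : c_req D2 = [seq (s, cr1, c_tick D, r_send2 r1 st1 s) | s <- lst true] ++
                       [seq (s, cr2, c_tick D1, r_send2 r2 st2 s) | s <- lst true]
    by rewrite Q2' Q1' DQ.
  have [D3 [HD3 [M3a M3b T3' K3' H3']]] := round2 P c d HD2 EQ.
  rewrite M2' upd_neq // M1' upd_eq fold_rdel2 S2' S1' DS in M3a.
  rewrite M2' upd_eq fold_rdel2 S2' S1' DS in M3b.
  have [D4 [HD4 [M4' T4' _ H4']]] := end2_ex HD3 M3a (skp_quorum _ _).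
  have M4b : c_rmode D4 r2 = RPh2 (c_tick D1) (recl (ord2 P d) (R22 (sig2 sg) (r_send2 r1 st1) (r_send2 r2 st2) true P) (no_rep I))
    by rewrite M4' upd_neq.
  have [D5 [HD5 [_ _ _ H5']]] := end2_ex HD4 M4b (ord2_quorum _ _ _).
  exists D5; split => //; rewrite H5' H4' H3' H2' H1' DH -!cats1 -!catA.
  by rewrite T4' upd_neq // !T3' !T2' upd_eq upd_neq // T1' upd_eq.
Qed.

Notation cw1 := (inl w1 : client R W).
Notation cw2 := (inl w2 : client R W).

Lemma inv_write_ex (C : cfg) w v : reach C -> c_wmode C w = WIdle I ->
  exists C', reach C' /\ [/\ c_srv C' = c_srv C,
    c_req C' = c_req C ++ bcast (inl w) (c_tick C) (w_send w (c_wst C w) v),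
    c_rep C' = c_rep C, c_wmode C' = upd (c_wmode C) w (WBusy v (c_tick C) (no_rep I))
    & [/\ c_wst C' = c_wst C, c_rst C' = c_rst C, c_rmode C' = c_rmode C, c_tick C' = (c_tick C).+1
        & c_hist C' = rcons (c_hist C) (InvW R w v)]].
Proof. by move=> HC H; eexists; split; [exact: reachS HC (st_inv_write t v H)|]. Qed.

Lemma end_write_ex (C : cfg) w v k rep : reach C -> c_wmode C w = WBusy v k rep -> quorum t rep ->
  exists C', reach C' /\ [/\ c_srv C' = c_srv C, c_req C' = c_req C,
    c_rep C' = c_rep C, c_wmode C' = upd (c_wmode C) w (WIdle I)
    & [/\ c_wst C' = upd (c_wst C) w (w_end w (c_wst C w) v rep), c_rst C' = c_rst C, c_rmode C' = c_rmode C,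
        c_tick C' = c_tick C & c_hist C' = rcons (c_hist C) (RespW R V w)]].
Proof. by move=> HC H1 H2; eexists; split; [exact: reachS HC (st_end_write H1 H2)|]. Qed.

Lemma enum_quorum f : quorum t (recl (enum 'I_S) f (no_rep I)).
Proof. by apply: recl_quorum; rewrite ?enum_uniq // size_enum_ord leq_subr. Qed.

Lemma write_one (C : cfg) w v : reach C -> c_req C = [::] -> c_rep C = [::] -> c_wmode C w = WIdle I ->
  exists C', reach C' /\ [/\ c_srv C' = (fun s => (s_recv s (c_srv C s) (inl w) (w_send w (c_wst C w) v s)).1),
    c_req C' = [::], c_rep C' = [::], c_wmode C' = c_wmode C &
    [/\ (forall w', w' != w -> c_wst C' w' = c_wst C w'), c_rst C' = c_rst C, c_rmode C' = c_rmode C,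
        c_tick C' = (c_tick C).+1 & c_hist C' = c_hist C ++ [:: InvW R w v; RespW R V w]]].
Proof.
move=> HC Hq Hp Hm.
have [C1 [HC1 [S1 Q1 P1 M1 [W1 T1 N1 K1 H1]]]] := inv_write_ex v HC Hm.
have EQ2 : c_req C1 = [::] ++ [seq (s, (inl w : client R W), c_tick C, w_send w (c_wst C w) v s) | s <- enum 'I_S] ++ [::]
  by rewrite Q1 Hq cats0.
have [C2 [HC2 [S2 Q2 P2 R2 [W2 M2 T2 K2 H2]]]] :=
  @proc_gen _ _ _ _ _ _ _ _ _ predT _ (enum_uniq _) _ _ _ HC1 EQ2.
set F := fun s => (s_recv s (c_srv C1 s) (inl w) (w_send w (c_wst C w) v s)).2.
have EQ3 : c_rep C2 = [::] ++ [seq ((inl w : client R W), s, c_tick C, F s) | s <- enum 'I_S] ++ [::]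
  by rewrite P2 P1 Hp filter_predT cats0.
have [C3 [HC3 [S3 Q3 P3 M3 [W3 N3 T3 K3 H3]]]] :=
  @deliv_w _ _ _ _ _ _ w (c_tick C) F predT _ _ _ _ HC2 EQ3.
have M3' : c_wmode C3 w = WBusy v (c_tick C) (recl (enum 'I_S) F (no_rep I))
  by rewrite M3 upd_eq M2 M1 upd_eq filter_predT fold_wdel.
have [C4 [HC4 [S4 Q4 P4 M4 [W4 T4 N4 K4 H4]]]] := end_write_ex HC3 M3' (enum_quorum _).
exists C4; split => //; split.
- rewrite S4 S3 S2 S1; apply: functional_extensionality => x; by rewrite mem_enum.
- by rewrite Q4 Q3 Q2 /= filter_false.
- by rewrite P4 P3 /= filter_false.
- by rewrite M4 M3 M2 M1 !upd_upd -Hm upd_same.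
- split.
  + by move=> w' Hw'; rewrite W4 upd_neq // W3 W2 W1.
  + by rewrite T4 T3 T2 T1.
  + by rewrite N4 N3 R2 N1.
  + by rewrite K4 K3 K2 K1.
  + by rewrite H4 H3 H2 H1 -!cats1 -catA.
Qed.

Definition Mw1 s := w_send w1 (w_init I w1) v1 s.
Definition Mw2 s := w_send w2 (w_init I w2) v2 s.
Definition sigW (B : pred 'I_S) s :=
  if B s then (s_recv s (s_recv s (s_init I s) cw2 (Mw2 s)).1 cw1 (Mw1 s)).1
  else (s_recv s (s_recv s (s_init I s) cw1 (Mw1 s)).1 cw2 (Mw2 s)).1.

Lemma write_conc B : exists C, reach C /\ [/\ c_srv C = sigW B, c_req C = [::], c_rep C = [::],
   c_rst C = r_init I & [/\ c_rmode C = (fun _ => RIdle I) &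
   c_hist C = [:: InvW R w1 v1; InvW R w2 v2; RespW R V w1; RespW R V w2]]].
Proof.
have Hw' : w2 != w1 by rewrite eq_sym.
have HC := @reach0 _ _ _ _ t I.
have [C1 [HC1 [S1 Q1 P1 M1 [W1 T1 N1 K1 H1]]]] := inv_write_ex v1 HC (w := w1) erefl.
have Hm2 : c_wmode C1 w2 = WIdle I by rewrite M1 upd_neq.
have [C2 [HC2 [S2 Q2 P2 M2 [W2 T2 N2 K2 H2]]]] := inv_write_ex v2 HC1 Hm2.
have EQ3 : c_req C2 = [seq (s, cw1, 0, Mw1 s) | s <- enum 'I_S] ++ [seq (s, cw2, 1, Mw2 s) | s <- enum 'I_S] ++ [::].
  by rewrite Q2 Q1 W1 K1 cats0.
have [C3 [HC3 [S3 Q3 P3 R3 [W3 M3 T3 K3 H3]]]] :=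
  @proc_gen _ _ _ _ _ _ _ _ _ B _ (enum_uniq _) _ _ _ HC2 EQ3.
have EQ4 : c_req C3 = [::] ++ [seq (s, cw1, 0, Mw1 s) | s <- enum 'I_S] ++ [seq (s, cw2, 1, Mw2 s) | s <- [seq s <- enum 'I_S | ~~ B s]] ++ [::].
  by rewrite Q3.
have [C4 [HC4 [S4 Q4 P4 R4 [W4 M4 T4 K4 H4]]]] :=
  @proc_gen _ _ _ _ _ _ _ _ _ predT _ (enum_uniq _) _ _ _ HC3 EQ4.
have EQ5 : c_req C4 = [::] ++ [seq (s, cw2, 1, Mw2 s) | s <- [seq s <- enum 'I_S | ~~ B s]] ++ [::].
  by rewrite Q4 /= filter_false.
have [C5 [HC5 [S5 Q5 P5 R5 [W5 M5 T5 K5 H5]]]] :=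
  @proc_gen _ _ _ _ _ _ _ _ _ predT _ (filter_uniq _ (enum_uniq _)) _ _ _ HC4 EQ5.
set F2a := fun s => (s_recv s (c_srv C2 s) cw2 (Mw2 s)).2.
set F1 := fun s => (s_recv s (c_srv C3 s) cw1 (Mw1 s)).2.
set F2c := fun s => (s_recv s (c_srv C4 s) cw2 (Mw2 s)).2.
set A := [seq (cw2, s, 1, F2a s) | s <- [seq s <- enum 'I_S | B s]].
set Cc := [seq (cw2, s, 1, F2c s) | s <- [seq s <- enum 'I_S | ~~ B s]].
have EQ6 : c_rep C5 = A ++ [seq (cw1, s, 0, F1 s) | s <- enum 'I_S] ++ Cc.
  by rewrite P5 P4 P3 P2 P1 !filter_predT -!catA.
have [C6 [HC6 [S6 Q6 P6 M6 [W6 R6 T6 K6 H6]]]] :=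
  @deliv_w _ _ _ _ _ _ w1 0 F1 predT _ _ _ _ HC5 EQ6.
have M6' : c_wmode C6 w1 = WBusy v1 0 (recl (enum 'I_S) F1 (no_rep I)).
  by rewrite M6 upd_eq M5 M4 M3 M2 upd_neq // M1 upd_eq filter_predT fold_wdel.
have [C7 [HC7 [S7 Q7 P7 M7 [W7 T7 R7 K7 H7]]]] := end_write_ex HC6 M6' (enum_quorum _).
have EQ8 : c_rep C7 = [::] ++ [seq (cw2, s, 1, F2a s) | s <- [seq s <- enum 'I_S | B s]] ++ Cc.
  by rewrite P7 P6 /= filter_false.
have [C8 [HC8 [S8 Q8 P8 M8 [W8 R8 T8 K8 H8]]]] :=
  @deliv_w _ _ _ _ _ _ w2 1 F2a predT _ _ _ _ HC7 EQ8.
have EQ9 : c_rep C8 = [::] ++ [seq (cw2, s, 1, F2c s) | s <- [seq s <- enum 'I_S | ~~ B s]] ++ [::].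
  by rewrite P8 /= filter_false cats0.
have [C9 [HC9 [S9 Q9 P9 M9 [W9 R9 T9 K9 H9]]]] :=
  @deliv_w _ _ _ _ _ _ w2 1 F2c predT _ _ _ _ HC8 EQ9.
set L := [seq s <- enum 'I_S | B s] ++ [seq s <- enum 'I_S | ~~ B s].
have M9' : c_wmode C9 w2 = WBusy v2 1 (recl L (fun s => if B s then F2a s else F2c s) (no_rep I)).
  rewrite M9 upd_eq M8 upd_eq M7 upd_neq // M6 upd_neq // M5 M4 M3 M2 upd_eq K1 !filter_predT fold_wdel.
  rewrite fold_wdel /recl foldl_cat; congr (WBusy _ _ _).
  have X : recl [seq s <- enum 'I_S | B s] F2a (no_rep I) =
           recl [seq s <- enum 'I_S | B s] (fun s => if B s then F2a s else F2c s) (no_rep I).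
    by apply: recl_eq => x; rewrite mem_filter => /andP [-> _].
  rewrite /recl in X; rewrite X.
  by apply: recl_eq => x; rewrite mem_filter => /andP [/negbTE -> _].
have QL : quorum t (recl L (fun s => if B s then F2a s else F2c s) (no_rep I)).
  have HL : perm_eq L (enum 'I_S) by rewrite /L (perm_filterC B).
  apply: recl_quorum; first by rewrite (perm_uniq HL) enum_uniq.
  by rewrite (perm_size HL) size_enum_ord leq_subr.
have [C10 [HC10 [S10 Q10 P10 M10 [W10 T10 R10 K10 H10]]]] := end_write_ex HC9 M9' QL.
exists C10; split => //; split.
- rewrite S10 S9 S8 S7 S6 S5 S4 S3 S2 S1; apply: functional_extensionality => x /=.
  rewrite /sigW !mem_enum /=; case Bx: (B x); by rewrite mem_filter Bx /= ?mem_enum.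
- by rewrite Q10 Q9 Q8 Q7 Q6 Q5 /= filter_false.
- by rewrite P10 P9 /= filter_false.
- by rewrite T10 T9 T8 T7 T6 T5 T4 T3 T2 T1.
- split.
  + by rewrite R10 R9 R8 R7 R6 R5 R4 R3 N2 N1.
  + by rewrite H10 H9 H8 H7 H6 H5 H4 H3 H2 H1.
Qed.

Lemma write_seq (wa wb : 'I_W) (va vb : V) : wa != wb -> exists C, reach C /\
  [/\ c_srv C = (fun s => (s_recv s (s_recv s (s_init I s) (inl wa) (w_send wa (w_init I wa) va s)).1
                             (inl wb) (w_send wb (w_init I wb) vb s)).1),
      c_req C = [::], c_rep C = [::], c_rst C = r_init I &
      [/\ c_rmode C = (fun _ => RIdle I) & c_hist C = [:: InvW R wa va; RespW R V wa; InvW R wb vb; RespW R V wb]]].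
Proof.
move=> Hab.
have HC := @reach0 _ _ _ _ t I.
have [C1 [HC1 [S1 Q1 P1 M1 [W1 T1 N1 K1 H1]]]] := write_one va HC erefl erefl (w := wa) erefl.
have Hm : c_wmode C1 wb = WIdle I by rewrite M1.
have [C2 [HC2 [S2 Q2 P2 M2 [W2 T2 N2 K2 H2]]]] := write_one vb HC1 Q1 P1 Hm.
exists C2; split => //; split => //.
- by rewrite S2 S1 W1 // eq_sym.
- by rewrite T2 T1.
- split; first by rewrite N2 N1.
  by rewrite H2 H1.
Qed.

Variable v0 : V.
Hypothesis Hat : atomic_impl t I v0.

Lemma conc_eq B P a q c d : val1 (sigW B) P a q c = val2 (sigW B) P a q d.
Proof.
have [C [HC [CS CQ CP CT [CM CH]]]] := write_conc B.
have [C' [HC' H']] := read_phase P a q c d HC CQ CP (f_equal (fun f => f r1) CT) (f_equal (fun f => f r2) CT) (f_equal (fun f => f r1) CM) (f_equal (fun f => f r2) CM).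
have := Hat HC'; rewrite H' CH CS /=.
exact: atomic_conc.
Qed.

Lemma seq_val12 P a q c : val1 (sigW pred0) P a q c = v2.
Proof.
have [C [HC [CS CQ CP CT [CM CH]]]] := write_seq v1 v2 Hw.
have [C' [HC' H']] := read_phase P a q c a HC CQ CP (f_equal (fun f => f r1) CT) (f_equal (fun f => f r2) CT) (f_equal (fun f => f r1) CM) (f_equal (fun f => f r2) CM).
have := Hat HC'; rewrite H' CH CS /=.
exact: atomic_seq.
Qed.

Lemma seq_val21 P a q c : val1 (sigW predT) P a q c = v1.
Proof.
have Hw' : w2 != w1 by rewrite eq_sym.
have [C [HC [CS CQ CP CT [CM CH]]]] := write_seq v2 v1 Hw'.
have [C' [HC' H']] := read_phase P a q c a HC CQ CP (f_equal (fun f => f r1) CT) (f_equal (fun f => f r2) CT) (f_equal (fun f => f r1) CM) (f_equal (fun f => f r2) CM).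
have := Hat HC'; rewrite H' CH CS /=.
exact: atomic_seq.
Qed.

Definition PT : pred 'I_S := fun _ => true.
Definition PF : pred 'I_S := fun _ => false.

Lemma val1_ext sg P P' a q c : {in skp c, P =1 P'} -> val1 sg P a q c = val1 sg P' a q c.
Proof.
move=> HP; rewrite /val1; case: (E1 sg a).2 => // .
by congr (_.2); congr (r_end2 _ _ _); apply: recl_eq => s Hs; rewrite /R21 HP.
Qed.

Lemma val1_PT_q sg a q q' c : val1 sg PT a q c = val1 sg PT a q' c.
Proof.
rewrite /val1; case: (E1 sg a).2 => //.
by congr (_.2); congr (r_end2 _ _ _); apply: recl_eq => s Hs; rewrite /R21 /PT !andbF.
Qed.

Lemma val2_PF_a sg a a' q d : val2 sg PF a q d = val2 sg PF a' q d.
Proof.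
rewrite /val2; case: (E2 sg q).2 => //.
by congr (_.2); congr (r_end2 _ _ _); apply: recl_eq => s Hs; rewrite /R22 /PF !andbF.
Qed.

Section Const.
Variable sg : 'I_S -> SState I.
Hypothesis H : forall P a q c d, val1 sg P a q c = val2 sg P a q d.

Lemma const_c P a q c c' : val1 sg P a q c = val1 sg P a q c'.
Proof. by rewrite (H P a q c c) (H P a q c' c). Qed.

Lemma const_P P a q c : val1 sg P a q c = val1 sg PT a q c.
Proof.
pose Pl (l : seq 'I_S) := fun s => (s \in l) || P s.
have E : forall l, val1 sg (Pl l) a q c = val1 sg P a q c.
  elim=> [|x l IH]; first by apply: val1_ext => s _; rewrite /Pl in_nil.
  rewrite (const_c _ _ _ c x) (@val1_ext _ _ (Pl l)); last first.
    by move=> s; rewrite mem_filter => /andP [Hs _]; rewrite /Pl inE (negbTE Hs).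
  by rewrite (const_c _ _ _ x c) IH.
rewrite -(E (enum 'I_S)); apply: val1_ext => s _; by rewrite /Pl mem_enum.
Qed.

Lemma const_all a q c a' q' c' : val1 sg PT a q c = val1 sg PT a' q' c'.
Proof.
rewrite (const_c _ _ _ c c') (val1_PT_q _ _ q q').
rewrite -(const_P PF) (H _ _ _ _ c') (val2_PF_a _ a a') -(H _ _ _ c') const_P.
by [].
Qed.

End Const.

Lemma val1_local sg sg' x q : (forall s, s != x -> sg s = sg' s) ->
  val1 sg PT x q x = val1 sg' PT x q x.
Proof.
move=> Hsg.
have HE : E1 sg x = E1 sg' x.
  rewrite /E1; congr (r_end1 _ _ _); apply: recl_eq => s; rewrite mem_filter => /andP [Hs _].
  by rewrite /rho11 Hsg.
rewrite /val1 /M21 HE; case: (E1 sg' x).2 => //.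
congr (_.2); congr (r_end2 _ _ _); apply: recl_eq => s; rewrite mem_filter => /andP [Hs _].
by rewrite /R21 /PT !andbF /sig2 /sig1 Hsg.
Qed.

Variable a0 : 'I_S.

Lemma chain : v1 = v2.
Proof.
pose U B := val1 (sigW B) PT a0 a0 a0.
have HB : forall l : seq 'I_S, U (fun s => s \in l) = U pred0.
  elim=> [|x l IH].
    by rewrite /U; congr (val1 _ _ _ _ _); apply: functional_extensionality => s; rewrite /sigW in_nil.
  rewrite -IH /U (const_all (conc_eq (fun s => s \in x :: l)) _ _ _ x x x).
  rewrite (const_all (conc_eq (fun s => s \in l)) _ _ _ x x x).
  apply: val1_local => s Hs; by rewrite /sigW inE (negbTE Hs).
have := HB (enum 'I_S).
rewrite /U seq_val12.
have -> : (fun s => s \in enum 'I_S) = predT by apply: functional_extensionality => s; rewrite mem_enum.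
by rewrite seq_val21.
Qed.

End Main.

Unset Implicit Arguments.

Theorem theorem1 (S R W t : nat) (V : Type) (v0 : V) :
  1 <= t -> 2 <= W -> 2 <= R -> 2 <= S ->
  (exists v1 v2 : V, [/\ v1 <> v0, v2 <> v0 & v1 <> v2]) ->
  ~ (exists I : Impl S R W V, atomic_impl t I v0).
Proof.
move=> Ht HW HR HS [v1 [v2 [_ _ Hv]]] [I Hat].
have HW0 : 0 < W by apply: leq_trans HW.
have HR0 : 0 < R by apply: leq_trans HR.
have HS0 : 0 < S by apply: leq_trans HS.
pose w1 : 'I_W := Ordinal HW0. pose w2 : 'I_W := Ordinal HW.
pose r1 : 'I_R := Ordinal HR0. pose r2 : 'I_R := Ordinal HR.
apply: Hv.
exact: (@chain S R W V t I w1 w2 r1 r2 v1 v2 isT isT Ht v0 Hat (Ordinal HS0)).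
Qed.
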